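(* Let $\mathcal{A}=(Q,\delta,I,F)$ be a complete Büchi automaton and let $p,q,r\in Q$ and $a\in\Sigma$ be such that $q\in\delta(r,a)$ and $p\preceq_{\mathit{de}}q$. Let $\mathcal{A}'=(Q,\delta',I,F)$ where $\delta'=\delta\cup\{r\xrightarrow{a}p\}$ (i.e. $\delta'(r,a)=\delta(r,a)\cup\{p\}$ and $\delta'$ agrees with $\delta$ elsewhere). Then $\mathcal{L}(\mathcal{A})=\mathcal{L}(\mathcal{A}')$.
   Context: A Büchi automaton is $\mathcal{A}=(Q,\delta,I,F)$ over a finite alphabet $\Sigma$ with $\delta:Q\times\Sigma\to2^Q$, complete if $\delta(q,a)\ne\emptyset$ always. A run from $q$ on $\alpha=\alpha_0\alpha_1\cdots$ is $\rho$ with $\rho_0=q$, $\rho_{i+1}\in\delta(\rho_i,\alpha_i)$; accepting if some state of $F$ occurs infinitely often; $\mathcal{L}(\mathcal{A})$ is the set of words with an accepting run from an initial state. Delayed simulation: in the game from $(p_0,r_0)$, in round $i$ Spoiler picks $p_i\xrightarrow{\alpha_i}p_{i+1}$ and Duplicator answers $r_i\xrightarrow{\alpha_i}r_{i+1}$; a Duplicator strategy is a map $\sigma$ with $\sigma(r,p\xrightarrow{a}p')\in\delta(r,a)$ (no lookahead). Duplicator wins if for all $i$, $p_i\in F$ implies $r_k\in F$ for some $k\ge i$. $p\preceq_{\mathit{de}}r$ (the delayed simulation on $\mathcal{A}$) iff Duplicator has a winning strategy in $\mathcal{A}$ from $(p,r)$. *)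

(* Defs.v *)
From mathcomp Require Import all_boot.
Set Implicit Arguments. Unset Strict Implicit. Unset Printing Implicit Defensive.

Record buchi (Q S : finType) := Buchi {
  delta : Q -> S -> {set Q};
  init  : {set Q};
  fin   : {set Q}
}.

Section Buchi.
Variables (Q S : finType).
Implicit Types (A : buchi Q S) (w : nat -> S) (rho : nat -> Q).

Definition complete A : Prop := forall q a, delta A q a != set0.

Definition run A q w rho : Prop :=
  rho 0 = q /\ forall i, rho i.+1 \in delta A (rho i) (w i).

Definition accepting A rho : Prop :=
  forall n, exists m, n <= m /\ rho m \in fin A.

Definition lang A (w : nat -> S) : Prop :=
  exists q rho, q \in init A /\ run A q w rho /\ accepting A rho.

(* Duplicator strategy sigma(r, p -a-> p') : it must answer with an
   a-successor of r (for every legal Spoiler transition). *)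
Definition dup_strategy A (sigma : Q -> Q -> S -> Q -> Q) : Prop :=
  forall r p a p', p' \in delta A p a -> sigma r p a p' \in delta A r a.

(* Duplicator's states r_i when playing sigma from r0 against Spoiler's
   sequence of transitions p_i -(w i)-> p_{i+1}. *)
Fixpoint dup_play (sigma : Q -> Q -> S -> Q -> Q) (r0 : Q) (p : nat -> Q)
  w (i : nat) : Q :=
  match i with
  | 0 => r0
  | i'.+1 => sigma (dup_play sigma r0 p w i') (p i') (w i') (p i'.+1)
  end.

Definition delayed_sim A (p r : Q) : Prop :=
  exists sigma, dup_strategy A sigma /\
    forall w (ps : nat -> Q), run A p w ps ->
      forall i, ps i \in fin A ->
        exists k, i <= k /\ dup_play sigma r ps w k \in fin A.

Definition add_trans A (r : Q) (a : S) (p : Q) : buchi Q S :=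
  Buchi (fun s b => if (s == r) && (b == a) then p |: delta A s b
                    else delta A s b)
        (init A) (fin A).
End Buchi.

(* Main.v *)
Require Import Defs.
From mathcomp Require Import all_boot.
From mathcomp Require Import zify.

Set Implicit Arguments. Unset Strict Implicit. Unset Printing Implicit Defensive.

Section Constr.
Variables (Q S : finType) (A : buchi Q S) (p q r : Q) (a : S).
Variable sigma : Q -> Q -> S -> Q -> Q.
Variables (w : nat -> S) (rho : nat -> Q).

Definition sw (t : nat) : bool := rho t.+1 \notin delta A (rho t) (w t).

Fixpoint jc (t : nat) : nat := match t with 0 => 0 | t'.+1 => jc t' + sw t' end.

Fixpoint G (Xo : nat -> Q) (t jn m k : nat) : Q :=
  match m with
  | 0 => rho t.+1
  | m'.+1 => if sw t && (k.+1 == jn) then q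
             else sigma (Xo k) (Xo k.+1) (w t) (G Xo t jn m' k.+1)
  end.

Fixpoint X (t : nat) : nat -> Q :=
  match t with
  | 0 => fun _ => rho 0
  | t'.+1 => fun k => G (X t') t' (jc t'.+1) (jc t'.+1 - k) k
  end.

Lemma X_S t k : X t.+1 k = G (X t) t (jc t.+1) (jc t.+1 - k) k.
Proof. by []. Qed.

Lemma jcS t : jc t.+1 = jc t + sw t. Proof. by []. Qed.

Lemma jc_mono m n : m <= n -> jc m <= jc n.
Proof.
move=> /subnK <-; elim: (n - m) => // d IH.
rewrite addSn jcS; lia.
Qed.

Lemma X_top t k : jc t <= k -> X t k = rho t.
Proof.
case: t => [//|t] h; rewrite X_S.
have -> : jc t.+1 - k = 0 by lia.
by [].
Qed.

Lemma X_succ t k : k < jc t.+1 ->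
  X t.+1 k = if sw t && (k.+1 == jc t.+1) then q
             else sigma (X t k) (X t k.+1) (w t) (X t.+1 k.+1).
Proof.
move=> h; rewrite X_S.
have -> : jc t.+1 - k = (jc t.+1 - k.+1).+1 by lia.
by [].
Qed.

Hypothesis Hstrat : dup_strategy A sigma.
Hypothesis Hq : q \in delta A r a.
Variable q0 : Q.
Hypothesis Hrun : run (add_trans A r a p) q0 w rho.

Lemma switch_facts t : sw t -> [/\ rho t = r, w t = a & rho t.+1 = p].
Proof.
rewrite /sw => hn.
have := (proj2 Hrun) t; rewrite /add_trans /=.
case: ifP => [/andP [/eqP e1 /eqP e2]|_]; last by move=> h; rewrite h in hn.
rewrite -e1 -e2 in_setU1 (negbTE hn) orbF => /eqP ->.
by split.
Qed.

Lemma step t k : k <= jc t -> X t.+1 k \in delta A (X t k) (w t).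
Proof.
move=> hk; move Hm: (jc t - k) => m.
elim: m k hk Hm => [|m IH] k hk Hm.
  have ek : k = jc t by lia.
  rewrite (X_top (t:=t)) ?ek //.
  case hs: (sw t).
    rewrite X_succ; last by rewrite jcS hs; lia.
    rewrite hs jcS hs addn1 eqxx /=.
    by case: (switch_facts hs) => -> -> _.
  rewrite X_top; last by rewrite jcS hs; lia.
  by move: hs; rewrite /sw => /negbFE.
have hk' : k < jc t by lia.
rewrite X_succ; last by rewrite jcS; lia.
have -> : sw t && (k.+1 == jc t.+1) = false.
  rewrite jcS; case: (sw t) => /=; [apply/eqP; lia | by []].
apply: Hstrat; apply: IH; lia.
Qed.

Lemma game t0 : sw t0 ->
  run A p (fun n => w (t0.+1 + n)) (fun n => X (t0.+1 + n) (jc t0).+1) /\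
  forall n, dup_play sigma q (fun n => X (t0.+1 + n) (jc t0).+1)
              (fun n => w (t0.+1 + n)) n = X (t0.+1 + n) (jc t0).
Proof.
move=> hs.
have hj : jc t0.+1 = (jc t0).+1 by rewrite jcS hs addn1.
have hjn : forall n, (jc t0).+1 <= jc (t0.+1 + n).
  by move=> n; rewrite -hj; apply: jc_mono; lia.
split.
  split.
    rewrite addn0 X_top ?hj //.
    by case: (switch_facts hs).
  move=> i; rewrite addnS; apply: step; exact: hjn.
elim=> [|n IH].
  rewrite addn0 X_succ ?hj // hs eqxx //.
transitivity (sigma (X (t0.+1+n) (jc t0)) (X (t0.+1+n) (jc t0).+1)
   (w (t0.+1+n)) (X (t0.+1+n).+1 (jc t0).+1)).
  by rewrite -IH -addnS.
rewrite addnS [in RHS]X_succ; last first.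
  have := hjn n.+1; rewrite addnS; lia.
have -> : sw (t0.+1 + n) && ((jc t0).+1 == jc (t0.+1 + n).+1) = false.
  have := hjn n; rewrite jcS.
  case: (sw (t0.+1 + n)) => /= h; [apply/eqP; lia | by []].
by [].
Qed.

Hypothesis Hwin : forall w (ps : nat -> Q), run A p w ps ->
      forall i, ps i \in fin A ->
        exists k, i <= k /\ dup_play sigma q ps w k \in fin A.

Lemma transfer t0 t : sw t0 -> t0 < t -> X t (jc t0).+1 \in fin A ->
  exists t', t <= t' /\ X t' (jc t0) \in fin A.
Proof.
move=> hs ht hf.
case: (game hs) => hr hd.
have := Hwin hr (i := t - t0.+1).
have -> : t0.+1 + (t - t0.+1) = t by lia.
move=> /(_ hf) [k [hk hf']].
exists (t0.+1 + k); split; first lia.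
by rewrite -hd.
Qed.

Lemma exists_switch t k : k < jc t -> exists t0, [/\ t0 < t, sw t0 & jc t0 = k].
Proof.
elim: t => [//|t IH]; rewrite jcS => h.
case: (ltnP k (jc t)) => h2.
  by case: (IH h2) => t0 [h3 h4 h5]; exists t0; split => //; lia.
case hs: (sw t); move: h; rewrite hs => h; last lia.
exists t; split => //; lia.
Qed.

Lemma lift k : forall t, k <= jc t -> X t k \in fin A ->
  exists t', t <= t' /\ X t' 0 \in fin A.
Proof.
elim: k => [|k IH] t hk hf; first by exists t.
case: (exists_switch hk) => t0 [h1 h2 h3].
move: hf; rewrite -h3 => hf.
case: (transfer h2 h1 hf) => t' [h4 h5].
have hk' : k <= jc t' by have := jc_mono h4; lia.
rewrite h3 in h5.
case: (IH t' hk' h5) => t'' [h6 h7].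
exists t''; split => //; lia.
Qed.

End Constr.

Theorem lemma11 (Q S : finType) (A : buchi Q S) (p q r : Q) (a : S) :
  complete A ->
  q \in delta A r a ->
  delayed_sim A p q ->
  forall w : nat -> S, lang A w <-> lang (add_trans A r a p) w.
Proof.
move=> _ Hq [sigma [Hstrat Hwin]] w; split.
  move=> [q0 [rho [hi [[h0 hr] hacc]]]].
  exists q0, rho; split => //; split => //; split => // i.
  rewrite /add_trans /=; case: (_ && _); last exact: hr.
  by rewrite in_setU1 hr orbT.
move=> [q0 [rho [hi [hrun hacc]]]].
exists q0, (fun t => X A q sigma w rho t 0); split => //; split.
  split; first by rewrite /= (proj1 hrun).
  by move=> i; apply: (step Hstrat Hq hrun).
move=> n; case: (hacc n) => m [hm hf].
have hf' : X A q sigma w rho m (jc A w rho m) \in fin A by rewrite X_top.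
case: (lift Hstrat Hq hrun Hwin (leqnn _) hf') => t' [h1 h2].
exists t'; split => //; lia.
Qed.
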